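(* Let $f:\mathbb{R}^n\to\mathbb{R}$ be subdifferentiable with subgradient Lipschitz continuous with constant $L>0$ (i.e. $\|g_x-g_y\|\le L\|x-y\|$ for all $x,y$, $g_x\in\partial f(x)$, $g_y\in\partial f(y)$). Let $x_0\in\mathbb{R}^n$ and suppose $\Omega=\{x: f(x)\le f(x_0)\}$ is compact and $f(x)\ge C$ on $\Omega$ for some constant $C$. Let $M\ge0$ be an integer, $0<\gamma<1$, and $(\eta_k)$ positive with $\sum_k\eta_k<\infty$. Let $x_{k+1}=x_k+\alpha_kd_k$, where $g_k\in\partial f(x_k)$, $d_k$ is a search direction, and $\alpha_k=(1/2)^{h_k}$ with $h_k$ the smallest integer in $\{0,1,2,\dots\}$ such that $$f(x_k+\alpha_k d_k)\le \max_{0\le j\le \min\{k,M\}} f(x_{k-j})+\gamma\alpha_k g_k^Td_k+\eta_k .$$ Suppose the search directions satisfy, for all $k$: (1) $\mu\|g_k\|\le\|d_k\|\le\nu$ for some constants $\mu,\nu>0$; and (2) $\dfrac{d_k^Tg_k}{\|d_k\|\,\|g_k\|}\le-\epsilon$ for some $\epsilon>0$. Then $$\liminf_{k\to\infty}\|g_k\|=0 .$$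
   Context: A subgradient of $f$ at $x$ is any $g\in\mathbb{R}^n$ with $f(y)\ge f(x)+g^T(y-x)$ for all $y$; $\partial f(x)$ is the set of subgradients at $x$, and $f$ is subdifferentiable if $\partial f(x)\neq\emptyset$ everywhere. *)

(* Defs.v *)
From HB Require Import structures.
From mathcomp Require Import all_boot all_order all_algebra.
From mathcomp Require Import all_classical all_reals all_analysis.
Set Implicit Arguments. Unset Strict Implicit. Unset Printing Implicit Defensive.
Import Order.TTheory GRing.Theory Num.Theory.
Local Open Scope ring_scope.
Local Open Scope classical_set_scope.

Definition dotv {R : realType} {n : nat} (u v : 'rV[R]_n) : R :=
  \sum_(i < n) u ord0 i * v ord0 i.
Definition enorm {R : realType} {n : nat} (u : 'rV[R]_n) : R :=
  Num.sqrt (dotv u u).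

Definition is_subgradient {R : realType} {n : nat} (f : 'rV[R]_n -> R)
  (x g : 'rV[R]_n) : Prop :=
  forall y, f x + dotv g (y - x) <= f y.

Definition subdiff {R : realType} {n : nat} (f : 'rV[R]_n -> R) (x : 'rV[R]_n)
  : set 'rV[R]_n := [set g | is_subgradient f x g].

Definition subdifferentiable {R : realType} {n : nat} (f : 'rV[R]_n -> R) : Prop :=
  forall x, subdiff f x !=set0.

Definition nm_max {R : realType} {n : nat} (f : 'rV[R]_n -> R)
  (x : nat -> 'rV[R]_n) (M k : nat) : R :=
  \big[Num.max/f (x k)]_(j < (minn k M).+1) f (x (k - j)%N).

Definition armijo_ok {R : realType} {n : nat} (f : 'rV[R]_n -> R)
  (x g d : nat -> 'rV[R]_n) (eta : nat -> R) (M : nat) (gamma : R)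
  (k h : nat) : Prop :=
  f (x k + ((1/2 : R) ^+ h) *: d k)
    <= nm_max f x M k + gamma * ((1/2 : R) ^+ h) * dotv (g k) (d k) + eta k.

(* Main.v *)
Require Import Defs.
From HB Require Import structures.
From mathcomp Require Import all_boot all_order all_algebra.
From mathcomp Require Import all_classical all_reals all_analysis.
From mathcomp Require Import ring lra zify.
Import Order.TTheory GRing.Theory Num.Theory.
Local Open Scope ring_scope.
Local Open Scope classical_set_scope.
Import numFieldNormedType.Exports.

Section V.
Context {R : realType} {n : nat}.
Implicit Types u v w : 'rV[R]_n.

Lemma dotvC u v : dotv u v = dotv v u.
Proof. by apply: eq_bigr => i _; rewrite mulrC. Qed.

Lemma dotvDl u v w : dotv (u + v) w = dotv u w + dotv v w.
Proof. by rewrite /dotv -big_split; apply: eq_bigr => i _; rewrite !mxE mulrDl. Qed.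

Lemma dotvZl a u w : dotv (a *: u) w = a * dotv u w.
Proof. by rewrite /dotv mulr_sumr; apply: eq_bigr => i _; rewrite !mxE mulrA. Qed.

Lemma dotvNl u w : dotv (- u) w = - dotv u w.
Proof. by rewrite -scaleN1r dotvZl mulN1r. Qed.

Lemma dotvBl u v w : dotv (u - v) w = dotv u w - dotv v w.
Proof. by rewrite dotvDl dotvNl. Qed.

Lemma dotvBr u v w : dotv w (u - v) = dotv w u - dotv w v.
Proof. by rewrite !(dotvC w) dotvBl. Qed.

Lemma dotvZr a u w : dotv w (a *: u) = a * dotv w u.
Proof. by rewrite !(dotvC w) dotvZl. Qed.

Lemma dotv_ge0 u : 0 <= dotv u u.
Proof. by apply: sumr_ge0 => i _; rewrite -expr2 sqr_ge0. Qed.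

Lemma enorm_ge0 u : 0 <= enorm u.
Proof. exact: sqrtr_ge0. Qed.

Lemma enorm_sq u : enorm u ^+ 2 = dotv u u.
Proof. by rewrite /enorm sqr_sqrtr // dotv_ge0. Qed.

Lemma enormZ a u : enorm (a *: u) = `|a| * enorm u.
Proof.
rewrite /enorm dotvZl dotvC dotvZl mulrA -expr2 sqrtrM ?sqr_ge0 //.
by rewrite sqrtr_sqr.
Qed.

Lemma dotv_quad u v t : 2 * t * dotv u v <= t ^+ 2 * dotv u u + dotv v v.
Proof.
have := dotv_ge0 (t *: u - v).
rewrite !dotvBl !dotvBr !dotvZl !dotvZr (dotvC v u).
lra.
Qed.

Lemma CS0 u v : enorm u = 0 -> dotv u v <= 0.
Proof.
move=> a0.
have uu0 : dotv u u = 0 by rewrite -enorm_sq a0 expr0n.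
rewrite leNgt; apply/negP => p.
have := dotv_quad u v ((dotv v v / dotv u v) + 1).
rewrite uu0 mulr0 add0r mulrDr mulrDl mulr1 -!mulrA mulVf ?gt_eqF // mulr1.
have := dotv_ge0 v. lra.
Qed.

Lemma CS u v : dotv u v <= enorm u * enorm v.
Proof.
have [a0|apos] := eqVneq (enorm u) 0.
  by rewrite a0 mul0r CS0.
have [b0|bpos] := eqVneq (enorm v) 0.
  by rewrite b0 mulr0 dotvC CS0.
have ap : 0 < enorm u by rewrite lt_def apos enorm_ge0.
have bp : 0 < enorm v by rewrite lt_def bpos enorm_ge0.
have := dotv_quad u v (enorm v / enorm u).
rewrite -!enorm_sq.
set a := enorm u; set b := enorm v; set t := b / a; set p := dotv u v.
have ta : t * a = b by rewrite /t mulfVK ?gt_eqF.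
have tp : 0 < t by rewrite /t divr_gt0.
move=> H.
have H1 : t * (p - a * b) <= 0 by nra.
by rewrite pmulr_rle0 // subr_le0 in H1.
Qed.

Lemma descent (f : 'rV[R]_n -> R) (L : R) x d gx gy :
  (forall y z gy gz, subdiff f y gy -> subdiff f z gz ->
     enorm (gy - gz) <= L * enorm (y - z)) ->
  subdiff f x gx -> subdiff f (x + d) gy ->
  f (x + d) <= f x + dotv gx d + L * enorm d ^+ 2.
Proof.
move=> HL Hx Hy.
have H1 := Hy x.
have E : x - (x + d) = - d by rewrite opprD addrA subrr add0r.
rewrite E -scaleN1r dotvZr in H1.
have E2 : (x + d) - x = d by rewrite addrC addrA addNr add0r.
have H2 := HL _ _ _ _ Hy Hx; rewrite E2 in H2.
have H3 := CS (gy - gx) d; rewrite dotvBl in H3.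
have H4 : enorm (gy - gx) * enorm d <= L * enorm d * enorm d.
  by rewrite ler_wpM2r ?enorm_ge0.
rewrite expr2; lra.
Qed.
End V.

Lemma nm_descent {R : realType} (F : nat -> R) (M K0 : nat) (s : R) :
  (M <= K0)%N -> 0 < s ->
  (forall k, (K0 <= k)%N -> F k.+1 <= \big[Num.max/F k]_(j < M.+1) F (k - j)%N - s) ->
  forall m, exists k, F k < m.
Proof.
move=> MK sp Hk m.
set B := \big[Num.max/F K0]_(j < M.+1) F (K0 - j)%N.
have HB : forall i, (i <= M)%N -> F (K0 - i)%N <= B.
  move=> i iM; have iM' : (i < M.+1)%N by [].
  exact: (le_bigmax _ _ (Ordinal iM')).
have claim : forall t s', (s' <= t)%N ->
    F (K0 + s')%N <= B - s * ((s' + M) %/ M.+1)%:R.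
  elim=> [|t IH] s' le.
    move: le; rewrite leqn0 => /eqP ->; rewrite add0n divn_small // mulr0 subr0 addn0.
    by have := HB 0%N (leq0n _); rewrite subn0.
  case: (leqP s' t) => [le'|lt]; first exact: IH.
  have -> : s' = t.+1 by apply/eqP; rewrite eqn_leq le lt.
  have E1 : ((t.+1 + M) %/ M.+1 = t %/ M.+1 + 1)%N.
    by rewrite addSnnS addnC -{1}(mul1n M.+1) divnMDl // addnC.
  rewrite E1 natrD mulrDr mulr1 opprD addrA addnS.
  apply: le_trans (Hk _ (leq_addr _ _)) _; rewrite lerD2r.
  apply: bigmax_le => [|j _].
    apply: le_trans (IH t (leqnn t)) _; rewrite lerD2l lerN2 ler_pM2l // ler_nat.
    by apply: leq_div2r; rewrite leq_addr.
  case: (leqP (nat_of_ord j) t) => [jt|tj].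
    rewrite -addnBA //; apply: le_trans (IH (t - j)%N (leq_subr _ _)) _.
    rewrite lerD2l lerN2 ler_pM2l // ler_nat; apply: leq_div2r.
    have := ltn_ord j; lia.
  have -> : (t %/ M.+1 = 0)%N by rewrite divn_small //; have := ltn_ord j; lia.
  rewrite mulr0 subr0.
  have -> : (K0 + t - j = K0 - (j - t))%N by have := ltn_ord j; lia.
  by apply: HB; have := ltn_ord j; lia.
have [T HT] : exists T : nat, B - m < s * T%:R.
  exists (Num.Def.archi_bound (`|(B - m) / s|)).
  have := archi_boundP (normr_ge0 ((B - m) / s)).
  set T := Num.Def.archi_bound _ => H.
  rewrite -ltr_pdivrMl //; apply: le_lt_trans H.
  by rewrite mulrC ler_norm.
exists (K0 + T * M.+1)%N.
apply: le_lt_trans (claim _ _ (leqnn _)) _.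
rewrite divnMDl // divn_small // addn0.
lra.
Qed.

Theorem mainTheorem4 (R : realType) (n : nat) (f : 'rV[R]_n -> R)
  (L : R) (x0 : 'rV[R]_n) (C : R) (M : nat) (gamma : R) (eta : nat -> R)
  (x g d : nat -> 'rV[R]_n) (alpha : nat -> R) (h : nat -> nat)
  (mu nu eps : R) :
  subdifferentiable f ->
  0 < L ->
  (forall y z gy gz, subdiff f y gy -> subdiff f z gz ->
     enorm (gy - gz) <= L * enorm (y - z)) ->
  @compact 'rV[R^o]_n [set y | f y <= f x0] ->
  (forall y, f y <= f x0 -> C <= f y) ->
  0 < gamma < 1 ->
  (forall k, 0 < eta k) ->
  cvgn (series eta) ->
  x 0%N = x0 ->
  (forall k, subdiff f (x k) (g k)) ->
  (forall k, armijo_ok f x g d eta M gamma k (h k)) ->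
  (forall k h', (h' < h k)%N -> ~ armijo_ok f x g d eta M gamma k h') ->
  (forall k, alpha k = (1/2 : R) ^+ h k) ->
  (forall k, x k.+1 = x k + alpha k *: d k) ->
  0 < mu -> 0 < nu -> 0 < eps ->
  (forall k, mu * enorm (g k) <= enorm (d k) <= nu) ->
  (forall k, dotv (d k) (g k) / (enorm (d k) * enorm (g k)) <= - eps) ->
  limn_einf (fun k => (enorm (g k))%:E) = 0%E.
Proof.
move=> Hsub Lp HL Hcomp HC /andP[g0 g1] etap etacvg Hx0 Hg Harm Hfail Halpha Hx
  mup nup epsp Hdn Hang.
have Hpos k : 0 < enorm (d k) * enorm (g k).
  have := Hang k; rewrite lt_def mulr_ge0 ?enorm_ge0 // andbT.
  case: eqVneq => // ->; rewrite invr0 mulr0; lra.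
have Hgpos k : 0 < enorm (g k).
  have := Hpos k; rewrite lt_def => /andP[/eqP ne _].
  rewrite lt_def enorm_ge0 andbT; apply/eqP => E; apply: ne; by rewrite E mulr0.
have Hdpos k : 0 < enorm (d k).
  have := Hpos k; rewrite lt_def => /andP[/eqP ne _].
  rewrite lt_def enorm_ge0 andbT; apply/eqP => E; apply: ne; by rewrite E mul0r.
have Hdg1 k : dotv (g k) (d k) <= - eps * (enorm (d k) * enorm (g k)).
  by have := Hang k; rewrite ler_pdivrMr // dotvC.
have Hdg k : dotv (g k) (d k) <= - (eps * mu) * enorm (g k) ^+ 2.
  apply: le_trans (Hdg1 k) _.
  have /andP[H1 _] := Hdn k.
  have H2 : mu * enorm (g k) * enorm (g k) <= enorm (d k) * enorm (g k).
    by rewrite ler_wpM2r ?enorm_ge0.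
  have H3 : eps * (mu * enorm (g k) * enorm (g k)) <= eps * (enorm (d k) * enorm (g k)).
    by rewrite ler_wpM2l // ltW.
  rewrite expr2; lra.
have nmge k : f (x k) <= nm_max f x M k by apply: bigmax_ge_id.
set c := (1 - gamma) * eps / (2 * L * nu).
have cpos : 0 < c by rewrite /c divr_gt0 ?mulr_gt0 //; lra.
have Hal k : alpha k = 1 \/ c * enorm (g k) <= alpha k.
  rewrite Halpha; case E: (h k) => [|h']; first by left; rewrite expr0.
  right.
  have := Hfail k h'; rewrite E => /(_ (ltnSn _)).
  rewrite /armijo_ok => /negP; rewrite -ltNge => Hlt.
  have [gy Hgy] := Hsub (x k + ((1/2 : R) ^+ h') *: d k).
  have Hd := @descent _ _ f L _ _ _ _ HL (Hg k) Hgy.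
  set a := (1/2 : R) ^+ h' in Hlt Hd *.
  have ap : 0 < a by rewrite /a exprn_gt0 //; lra.
  rewrite enormZ gtr0_norm // dotvZr in Hd.
  have := nmge k; have := etap k; have := Hdg1 k; have := Hdpos k; have := Hgpos k.
  have /andP[_ Hnu] := Hdn k.
  set D := enorm (d k) in Hd Hnu *; set G := enorm (g k) in Hnu *.
  set p := dotv (g k) (d k) in Hlt Hd *.
  move=> Gp Dp Hp etp Hnm.
  have H1 : (1 - gamma) * a * (- p) < L * a ^+ 2 * D ^+ 2 by lra.
  have H2 : (1 - gamma) * (- p) < L * a * D ^+ 2.
    rewrite -(ltr_pM2l ap); nra.
  have H3 : (1 - gamma) * eps * G < L * a * D.
    rewrite -(ltr_pM2r Dp); nra.
  have H4 : (1 - gamma) * eps * G <= L * a * nu.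
    apply: ltW; apply: lt_le_trans H3 _; rewrite ler_wpM2l // ltW // mulr_gt0 //.
  rewrite exprS /c mulrAC ler_pdivrMr; last by rewrite !mulr_gt0.
  rewrite -/a (_ : 1 / 2 * a * (2 * L * nu) = L * a * nu) //; field.
  by [].
have key : forall del, 0 < del -> forall N,
    ~ (forall k, (N <= k)%N -> del <= enorm (g k)).
  move=> del delp N Hge.
  set a := Num.min 1 (c * del).
  have ap : 0 < a by rewrite /a lt_min ltr01 mulr_gt0.
  have Hak k : (N <= k)%N -> a <= alpha k.
    move=> Nk; case: (Hal k) => [->|H]; first by rewrite /a ge_min lexx.
    apply: le_trans H; rewrite /a ge_min; apply/orP; right.
    by rewrite ler_pM2l // Hge.
  set s0 := gamma * a * (eps * mu * del ^+ 2).
  have s0p : 0 < s0 by rewrite /s0 !mulr_gt0 // exprn_gt0.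
  have Hdec k : (N <= k)%N -> f (x k.+1) <= nm_max f x M k - s0 + eta k.
    move=> Nk; have := Harm k; rewrite /armijo_ok -Halpha -Hx.
    have := Hak k Nk; have := Hdg k; have := Hge k Nk.
    set G := enorm (g k); set p := dotv (g k) (d k); set al := alpha k.
    move=> HG Hp Ha Harmk.
    have G2 : del ^+ 2 <= G ^+ 2 by rewrite !expr2; nra.
    have e1 : p <= - (eps * mu * del ^+ 2).
      apply: le_trans Hp _; rewrite mulNr lerN2; apply: ler_wpM2l => //.
      by rewrite mulr_ge0 // ltW.
    have e2 : al * p <= a * - (eps * mu * del ^+ 2).
      have em : 0 < eps * mu * del ^+ 2 by rewrite !mulr_gt0 // exprn_gt0.
      move: em e1 Ha; generalize (eps * mu * del ^+ 2) => e em e1 Ha.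
      have h1 : al * p <= al * - e by apply: ler_wpM2l => //; exact: le_trans (ltW ap) Ha.
      apply: le_trans h1 _; rewrite !mulrN lerN2; apply: ler_wpM2r => //; exact: ltW.
    have e3 : gamma * al * p <= - s0.
      rewrite /s0 -mulrA; have := ler_wpM2l (ltW g0) e2; lra.
    lra.
  have s0p2 : 0 < s0 / 2 by rewrite divr_gt0.
  have [N2 _ HN2] := cvgr0_norm_lt eta (cvg_series_cvg_0 etacvg) _ s0p2.
  have Hdec2 : forall k, (N + N2 + M <= k)%N ->
      f (x k.+1) <= \big[Num.max/f (x k)]_(j < M.+1) f (x (k - j)%N) - s0 / 2.
    move=> k Hk.
    have h1 := Hdec k ltac:(lia); rewrite /nm_max in h1.
    have E : minn k M = M by apply/minn_idPr; lia.
    rewrite E in h1.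
    have h2 : `|eta k| < s0 / 2 by apply: HN2; rewrite /=; lia.
    rewrite ger0_norm in h2; last exact: ltW.
    lra.
  have [k Hk] := nm_descent (fun k => f (x k)) M (N + N2 + M) (s0 / 2) (leq_addl (N + N2) M) s0p2 Hdec2 (Num.min C (f x0)).
  move: Hk; rewrite /= lt_min => /andP[H1 H2].
  have := HC (x k) (ltW H2); lra.
have ex : forall e, 0 < e -> forall n0, exists k, (n0 <= k)%N /\ enorm (g k) < e.
  move=> e ep n0; apply: contrapT => H; apply: (key e ep n0) => k nk.
  rewrite leNgt; apply/negP => lt; apply: H; by exists k.
rewrite limn_einf_lim.
have -> : einfs (fun k => (enorm (g k))%:E) = fun _ => 0%E.
  apply: funext => n0; apply: le_anti; apply/andP; split.
    apply/lee_addgt0Pr => e ep; rewrite add0e; apply: ge_ereal_inf.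
    have [k [nk lt]] := ex e ep n0.
    exists (enorm (g k))%:E; first by exists k.
    by rewrite lee_fin ltW.
  by apply: le_ereal_inf_tmp => _ [k _ <-]; rewrite lee_fin enorm_ge0.
exact: lim_cst.
Qed.
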